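(* Let $Z=(Z_i)_{i=1}^n$ be a stationary ergodic Markov chain on a finite state space $\mathcal S$ with equilibrium distribution $\pi$, and let $\pi_{\min}:=\min_{x\in\mathcal S}\pi_x$. Then $$\Psi(Z)\le\Bigl(\log_2\frac1{\pi_{\min}}+3\Bigr)t_{\mathrm{mix}}.$$
   Context: $\psi(V\mid W):=\sup\bigl|\frac{\mathbb P(A\cap B)-\mathbb P(A)\mathbb P(B)}{\mathbb P(A)\mathbb P(B)}\bigr|$ over $A\in\sigma(V),B\in\sigma(W)$ with positive probability; $\Psi(Z):=\min\{j\ge1:\psi(Z_{i+j}\mid Z_i)\le1/4\text{ for all }i\in\{1,\dots,n-j\}\}$. Total variation distance $d_{TV}(\mu,\nu):=\max_{A\subseteq\mathcal S}|\mu(A)-\nu(A)|$; $d(t):=\sup_{i\in\mathcal S}d_{TV}(\mathbb P(Z_t=\cdot\mid Z_0=i),\pi)$ (for the chain with the given transition matrix); $t_{\mathrm{mix}}:=\min\{t\ge1:d(t)\le1/4\}$. *)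

(* Defs.v *)
From HB Require Import structures.
From mathcomp Require Import all_boot all_order all_algebra.
From mathcomp Require Import reals exp zify.
Set Implicit Arguments. Unset Strict Implicit. Unset Printing Implicit Defensive.
Import Order.TTheory GRing.Theory Num.Theory.
Local Open Scope ring_scope.

Section MC.
Variables (R : realType) (S : finType).
Variables (K : S -> S -> R) (pi : S -> R).

Definition stochastic := (forall x y, 0 <= K x y) /\ (forall x, \sum_y K x y = 1).
Definition distribution := (forall x, 0 <= pi x) /\ \sum_x pi x = 1.

Fixpoint kpow (t : nat) : S -> S -> R :=
  match t with
  | 0 => fun x y => if x == y then 1 else 0
  | t'.+1 => fun x y => \sum_z kpow t' x z * K z y
  end.

Definition stationary_dist := distribution /\ forall y, \sum_x pi x * K x y = pi y.

Definition irreducible := forall x y, exists t, 0 < kpow t x y.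
Definition aperiodic := forall x (d : nat),
  (forall t, (0 < t)%N -> 0 < kpow t x x -> (d %| t)%N) -> d = 1%N.
Definition ergodic := irreducible /\ aperiodic.

Definition pi_min : R := \big[Num.min/1]_x pi x.
(* (min with 1 is harmless since pi is a distribution: every pi x <= 1) *)

Variable N : nat.
Definition path := {ffun 'I_N.+1 -> S}.
Definition path_prob (w : path) : R :=
  pi (w ord0) * \prod_(i < N) K (w (inord i)) (w (inord i.+1)).
Definition Pr (E : {set path}) : R := \sum_(w in E) path_prob w.
(* the event {Z_i \in A}; these are exactly the events of sigma(Z_i) *)
Definition ev (i : 'I_N.+1) (A : {set S}) : {set path} := [set w : path | w i \in A].

Definition psi (k i : 'I_N.+1) : R :=
  \big[Num.max/0]_(A : {set S})
   \big[Num.max/0]_(B : {set S} | (0 < Pr (ev k A)) && (0 < Pr (ev i B)))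
     `| (Pr (ev k A :&: ev i B) - Pr (ev k A) * Pr (ev i B))
          / (Pr (ev k A) * Pr (ev i B)) |.

Definition Psi_ok (j : nat) : bool :=
  (0 < j)%N && [forall i : 'I_N.+1, forall k : 'I_N.+1,
                 (val k == (val i + j)%N) ==> (psi k i <= 4^-1)].

Lemma Psi_ex : exists j, Psi_ok j.
Proof.
exists N.+2; rewrite /Psi_ok /=; apply/forallP => i; apply/forallP => k.
apply/implyP => /eqP Hk; have := ltn_ord k; rewrite Hk.
by move=> H; exfalso; move: H; rewrite ltnNge /=; apply/negP; rewrite negbK; lia.
Qed.

Definition Psi : nat := ex_minn Psi_ex.

Definition dTV (mu nu : S -> R) : R :=
  \big[Num.max/0]_(A : {set S}) `| \sum_(y in A) mu y - \sum_(y in A) nu y |.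
Definition dist (t : nat) : R := \big[Num.max/0]_(x : S) dTV (kpow t x) pi.
Definition is_tmix (t : nat) : Prop :=
  (1 <= t)%N /\ dist t <= 4^-1 /\ forall s, (1 <= s)%N -> (s < t)%N -> ~ (dist s <= 4^-1).

End MC.

(* Main.v *)
Require Import Defs.
From HB Require Import structures.
From mathcomp Require Import all_boot all_order all_algebra.
From mathcomp Require Import reals exp.
From mathcomp Require Import zify ring lra.
Set Implicit Arguments. Unset Strict Implicit. Unset Printing Implicit Defensive.
Import Order.TTheory GRing.Theory Num.Theory.
Local Open Scope ring_scope.


Section Chain.
Variables (R : realType) (S : finType).

Definition ext n (u : {ffun 'I_n -> S}) (y : S) : {ffun 'I_n.+1 -> S} :=
  [ffun i => if unlift ord_max i is Some j then u j else y].

Definition restr n (w : {ffun 'I_n.+1 -> S}) : {ffun 'I_n -> S} :=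
  [ffun j => w (lift ord_max j)].

Lemma sum_split n (F : {ffun 'I_n.+1 -> S} -> R) :
  \sum_w F w = \sum_(u : {ffun 'I_n -> S}) \sum_(y : S) F (ext u y).
Proof.
rewrite pair_big /=.
rewrite (reindex (fun p : {ffun 'I_n -> S} * S => ext p.1 p.2)) //.
exists (fun w => (restr w, w ord_max)).
- move=> [u y] _ /=; congr pair.
  + by apply/ffunP => j; rewrite !ffunE liftK.
  + by rewrite ffunE unlift_none.
- move=> w _ /=; apply/ffunP => i; rewrite ffunE.
  by case: unliftP => [j ->|->]; rewrite ?ffunE.
Qed.

Lemma ext_max n (u : {ffun 'I_n -> S}) y : ext u y ord_max = y.
Proof. by rewrite ffunE unlift_none. Qed.

Lemma ext_lt n (u : {ffun 'I_n.+1 -> S}) y (i : 'I_n.+2) :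
  (i < n.+1)%N -> ext u y i = u (inord i).
Proof.
rewrite ffunE; case: unliftP => [j ->|->] /=.
  have hj : bump n.+1 j = j by rewrite /bump leqNgt ltn_ord.
  by move=> _; congr (u _); apply/val_inj; rewrite /= hj inordK.
by move=> H; exfalso; move: H; apply/negP; rewrite -leqNgt.
Qed.

Lemma ext_inord n (u : {ffun 'I_n.+1 -> S}) y k :
  (k < n.+1)%N -> ext u y (inord k) = u (inord k).
Proof.
move=> hk; rewrite ext_lt inordK //; exact: (leq_trans hk).
Qed.

Lemma ext_inord_max n (u : {ffun 'I_n -> S}) y : ext u y (inord n) = y.
Proof.
by rewrite [X in ext u y X](_ : _ = ord_max) ?ext_max //; apply/val_inj; rewrite /= inordK.
Qed.

Definition chain n (v : S -> R) (M : nat -> S -> S -> R) (w : {ffun 'I_n.+1 -> S}) :=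
  v (w ord0) * \prod_(i < n) M i (w (inord i)) (w (inord i.+1)).

Fixpoint vec n (v : S -> R) (M : nat -> S -> S -> R) : S -> R :=
  match n with 0 => v | n'.+1 => fun y => \sum_x vec n' v M x * M n' x y end.

Lemma chain_sum n v M (f : S -> R) :
  \sum_(w : {ffun 'I_n.+1 -> S}) chain v M w * f (w ord_max) = \sum_y vec n v M y * f y.
Proof.
elim: n f => [|n IH] f.
  rewrite sum_split.
  transitivity (\sum_(u : {ffun 'I_0 -> S}) \sum_y v y * f y).
    apply: eq_bigr => u _; apply: eq_bigr => y _.
    rewrite /chain /= big_ord0 mulr1.
    by rewrite [X in ext u y X](_ : _ = ord_max) ?ext_max //; apply/val_inj.
  by rewrite sumr_const card_ffun card_ord expn0 mulr1n.
rewrite sum_split.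
transitivity (\sum_(u : {ffun 'I_n.+1 -> S}) chain v M u *
               (\sum_y M n (u ord_max) y * f y)).
  apply: eq_bigr => u _; rewrite mulr_sumr; apply: eq_bigr => y _.
  rewrite ext_max /chain big_ord_recr /= mulrA -!mulrA; congr (_ * _).
    by rewrite (ext_lt _ _ (i := ord0)) //; congr (v (u _)); apply/val_inj; rewrite /= inordK.
  rewrite !mulrA; congr (_ * _ * _).
  - apply: eq_bigr => i _; rewrite !ext_inord //; have := ltn_ord i; lia.
  - rewrite (ext_inord u y (k:=n)) // ext_inord_max; congr (M n (u _) _).
    by apply/val_inj; rewrite /= inordK.
rewrite (IH (fun x => \sum_y M n x y * f y)).
rewrite /=; under eq_bigr do rewrite mulr_sumr.
rewrite exchange_big /=; apply: eq_bigr => y _; rewrite mulr_suml.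
by apply: eq_bigr => x _; rewrite mulrA.
Qed.


Section Markov.
Variables (K : S -> S -> R) (pi : S -> R).
Hypothesis (Kst : stochastic K).
Hypothesis (pist : forall y, \sum_x pi x * K x y = pi y).

Lemma kpow_CK s t x y : kpow K (s + t) x y = \sum_z kpow K s x z * kpow K t z y.
Proof.
elim: t y => [|t IH] y.
  rewrite addn0 /= (bigD1 y) //= eqxx mulr1 big1 ?addr0 // => z /negbTE.
  by rewrite eq_sym => ->; rewrite mulr0.
rewrite addnS /=; under eq_bigr do rewrite IH mulr_suml.
rewrite exchange_big /=; apply: eq_bigr => z _; rewrite mulr_sumr.
by apply: eq_bigr => w _; rewrite mulrA.
Qed.

Lemma kpow_ge0 t x y : 0 <= kpow K t x y.
Proof.
elim: t y => [|t IH] y /=; first by case: (x == y).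
by apply: sumr_ge0 => z _; rewrite mulr_ge0 //; case: Kst.
Qed.

Lemma kpow_row t x : \sum_y kpow K t x y = 1.
Proof.
elim: t => [|t IH] /=.
  by rewrite (bigD1 x) //= eqxx big1 ?addr0 // => z /negbTE; rewrite eq_sym => ->.
rewrite exchange_big /=; rewrite -IH; apply: eq_bigr => z _.
by rewrite -mulr_sumr; case: Kst => _ ->; rewrite mulr1.
Qed.

Lemma kpow_stat t y : \sum_x pi x * kpow K t x y = pi y.
Proof.
elim: t y => [|t IH] y /=.
  rewrite (bigD1 y) //= eqxx mulr1 big1 ?addr0 // => z /negbTE ->; by rewrite mulr0.
under eq_bigr do rewrite mulr_sumr.
rewrite exchange_big /=; rewrite -pist; apply: eq_bigr => z _.
by rewrite -IH mulr_suml; apply: eq_bigr => x _; rewrite mulrA.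
Qed.

Variables (A B : {set S}) (i k : nat).
Hypothesis ik : (i < k)%N.

Definition ind m (y : S) : R :=
  (if m == k then (y \in A)%:R else 1) * (if m == i then (y \in B)%:R else 1).
Arguments ind : simpl never.
Definition vv y := pi y * ind 0 y.
Definition MM m x y := K x y * ind m.+1 y.

Lemma L1 m y : (m <= i)%N -> vec m vv MM y = pi y * (if m == i then (y \in B)%:R else 1).
Proof.
elim: m y => [|m IH] y hm /=.
  by rewrite /vv /ind (_ : (0 == k) = false) ?mul1r //; apply/negbTE/eqP; move: ik; lia.
have E : forall x, vec m vv MM x * MM m x y = pi x * K x y * ind m.+1 y.
  move=> x; rewrite IH ?(ltnW hm) // (_ : (m == i) = false) ?mulr1 ?mulrA //.
  by apply/negbTE/eqP; move: hm; lia.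
under eq_bigr do rewrite E.
rewrite -mulr_suml pist /ind (_ : (m.+1 == k) = false) ?mul1r //.
by apply/negbTE/eqP; move: ik hm; lia.
Qed.

Lemma L2 d y : (i + d <= k)%N -> vec (i + d)%N vv MM y =
  (if (i + d)%N == k then (y \in A)%:R else 1) * \sum_(x in B) pi x * kpow K d x y.
Proof.
elim: d y => [|d IH] y hd.
  rewrite addn0 L1 // eqxx ifF ?mul1r; last by apply/eqP; lia.
  case: (boolP (y \in B)) => yB.
    rewrite mulr1 (bigD1 y) //= eqxx mulr1 big1 ?addr0 // => z /andP [_ /negbTE ->].
    by rewrite mulr0.
  rewrite mulr0 big1 // => z zB /=; case: eqP => [E|_]; last by rewrite mulr0.
  by move: zB; rewrite E (negbTE yB).
rewrite addnS /=.
have E : forall x, vec (i + d)%N vv MM x * MM (i + d)%N x y =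
   (\sum_(z in B) pi z * kpow K d z x) * MM (i + d)%N x y.
  move=> x; rewrite IH; last by move: hd; lia.
  by rewrite ifF ?mul1r //; apply/eqP; move: hd; lia.
under eq_bigr do rewrite E.
rewrite /MM /ind (_ : ((i + d).+1 == i) = false) ?mulr1; last first.
  by apply/negbTE/eqP; lia.
under eq_bigr do rewrite mulrA.
rewrite -mulr_suml mulrC; congr (_ * _).
rewrite (eq_bigr (fun j => \sum_(z in B) pi z * kpow K d z j * K j y)); last first.
  by move=> j _; rewrite mulr_suml.
rewrite exchange_big /=; apply: eq_bigr => z _; rewrite mulr_sumr.
by apply: eq_bigr => x _; rewrite mulrA.
Qed.

Lemma L3 d : \sum_y vec (k + d)%N vv MM y = \sum_y vec k vv MM y.
Proof.
elim: d => [|d IH]; first by rewrite addn0.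
rewrite addnS /= exchange_big /= -IH; apply: eq_bigr => x _.
rewrite -mulr_sumr -[RHS]mulr1; congr (_ * _).
rewrite -[RHS](proj2 Kst x); apply: eq_bigr => y _.
rewrite /MM /ind ifF ?mul1r; last by apply/eqP; lia.
by rewrite ifF ?mulr1 //; apply/eqP; move: ik; lia.
Qed.

Variables (N : nat) (ii kk : 'I_N.+1).
Hypotheses (Hi : val ii = i) (Hk : val kk = k).

Lemma prod_if (c : S -> R) (w : {ffun 'I_N.+1 -> S}) (j0 : 'I_N.+1) m :
  val j0 = m -> \prod_(j < N.+1) (if val j == m then c (w j) else 1) = c (w j0).
Proof.
move=> <-; rewrite (bigD1 j0) //= eqxx big1 ?mulr1 // => j /negbTE.
by rewrite -val_eqE => ->.
Qed.

Lemma Pr_formula :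
  Pr K pi (ev kk A :&: ev ii B) = \sum_(x in B) pi x * \sum_(y in A) kpow K (k - i)%N x y.
Proof.
transitivity (\sum_(w : {ffun 'I_N.+1 -> S}) chain vv MM w * (fun _ => 1) (w ord_max)).
  rewrite /Pr big_mkcond; apply: eq_bigr => w _; rewrite mulr1.
  have P1 : chain vv MM w = path_prob K pi w * \prod_(j < N.+1) ind j (w j).
    have Q : \prod_(j < N.+1) ind j (w j) =
        ind 0 (w ord0) * \prod_(j < N) ind j.+1 (w (inord j.+1)).
      rewrite big_ord_recl; congr (_ * _); apply: eq_bigr => j _.
      have E : lift ord0 j = inord j.+1.
        by apply/val_inj; rewrite /= inordK /bump; have := ltn_ord j; lia.
      by rewrite E inordK //; have := ltn_ord j; lia.
    rewrite Q /chain /vv /MM big_split /path_prob /=.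
    set a := pi _; set b := ind 0 _; set P := \prod_(j < N) K _ _.
    set P' := \prod_(j < N) ind _ _; ring.
  rewrite P1 /ind big_split /= (prod_if (fun y => (y \in A)%:R) w Hk).
  rewrite (prod_if (fun y => (y \in B)%:R) w Hi) !inE.
  by case: (w kk \in A); case: (w ii \in B); rewrite /= ?mulr1 ?mulr0.
rewrite (chain_sum N vv MM (fun _ => 1)).
have kN : (k <= N)%N by rewrite -Hk -ltnS ltn_ord.
under eq_bigr do rewrite mulr1.
have := L3 (N - k)%N; rewrite subnKC // => ->.
have HL2 : forall y, vec k vv MM y = (y \in A)%:R * \sum_(x in B) pi x * kpow K (k - i)%N x y.
  move=> y; have := L2 (d := (k - i)%N) y; rewrite subnKC ?(ltnW ik) // eqxx.
  by move=> /(_ (leqnn k)).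
under eq_bigr do rewrite HL2.
rewrite [RHS](eq_bigr (fun x => \sum_(y in A) pi x * kpow K (k - i)%N x y)); last first.
  by move=> x _; rewrite mulr_sumr.
rewrite exchange_big /= [RHS]big_mkcond /=; apply: eq_bigr => y _.
by case: (y \in A); rewrite ?mul1r ?mul0r.
Qed.

End Markov.
End Chain.


Section Mix.
Variables (R : realType) (S : finType) (K : S -> S -> R) (pi : S -> R).
Hypothesis (Kst : stochastic K).
Hypothesis (pist : forall y, \sum_x pi x * K x y = pi y).
Hypothesis (pi0 : forall x, 0 <= pi x).
Hypothesis (pi1 : \sum_x pi x = 1).

Lemma lebm (I : finType) (F : I -> R) i0 : F i0 <= \big[Num.max/0]_i F i.
Proof. by rewrite (bigD1 i0) //= le_max lexx. Qed.

Lemma sum_ge_term (I : finType) (P : pred I) (F : I -> R) i0 :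
  (forall i, P i -> 0 <= F i) -> P i0 -> F i0 <= \sum_(i | P i) F i.
Proof.
move=> H P0; rewrite (bigD1 i0) //= lerDl sumr_ge0 // => i /andP [Pi _]; exact: H.
Qed.

Lemma big_setT' (F : S -> R) : \sum_(x in [set: S]) F x = \sum_x F x.
Proof. by apply: eq_bigl => x; rewrite in_setT. Qed.

Definition KA t x (A : {set S}) := \sum_(y in A) kpow K t x y.
Definition Db t c := forall x x' A, KA t x A - KA t x' A <= c.

Lemma KA_ge0 t x A : 0 <= KA t x A.
Proof. by apply: sumr_ge0 => y _; apply: kpow_ge0. Qed.

Lemma KA_le1 t x A : KA t x A <= 1.
Proof.
rewrite -(kpow_row Kst t x) /KA big_mkcond /=; apply: ler_sum => y _.
by case: (y \in A) => //; apply: kpow_ge0.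
Qed.

Lemma Db1 t : Db t 1.
Proof.
move=> x x' A; have := KA_le1 t x A; have := KA_ge0 t x' A; lra.
Qed.

Lemma KA_CK s t x A : KA (s + t) x A = \sum_z kpow K s x z * KA t z A.
Proof.
rewrite /KA; under eq_bigr do rewrite kpow_CK.
rewrite exchange_big /=; apply: eq_bigr => z _; by rewrite mulr_sumr.
Qed.

Lemma Db_mul s t a b : Db s a -> Db t b -> Db (s + t) (a * b).
Proof.
move=> Hs Ht x x' A.
set g := fun z => KA t z A.
set mu := fun z => kpow K s x z - kpow K s x' z.
have E : KA (s + t) x A - KA (s + t) x' A = \sum_z mu z * g z.
  rewrite !KA_CK -sumrB; apply: eq_bigr => z _; by rewrite /mu mulrBl.
have mu0 : \sum_z mu z = 0 by rewrite sumrB !(kpow_row Kst) subrr.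
case: (arg_maxP g (i0 := x) (P := predT) isT) => zM _ HM.
case: (arg_minP g (i0 := x) (P := predT) isT) => zm _ Hm.
set P := [set z | 0 < mu z].
have EP : \sum_(z | z \notin P) mu z = - \sum_(z in P) mu z.
  rewrite (bigID (mem P)) /= in mu0.
  by apply/eqP; rewrite -addr_eq0 addrC mu0.
rewrite E (bigID (mem P)) /=.
have H1 : \sum_(z in P) mu z * g z <= (\sum_(z in P) mu z) * g zM.
  rewrite mulr_suml; apply: ler_sum => z; rewrite inE => /ltW h.
  by apply: ler_wpM2l => //; apply: HM.
have H2 : \sum_(z | z \notin P) mu z * g z <= (\sum_(z | z \notin P) mu z) * g zm.
  rewrite mulr_suml; apply: ler_sum => z; rewrite !inE -leNgt => h.
  by apply: ler_wnM2l => //; apply: Hm.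
have HP0 : 0 <= \sum_(z in P) mu z by apply: sumr_ge0 => z; rewrite inE => /ltW.
have HPa : \sum_(z in P) mu z <= a.
  have := Hs x x' P; rewrite /KA -sumrB; done.
have Hgb : g zM - g zm <= b by apply: Ht.
have Hg0 : 0 <= g zM - g zm by rewrite subr_ge0; apply: Hm.
apply: le_trans (lerD H1 H2) _; rewrite EP mulNr -mulrBr.
apply: le_trans (ler_pM HP0 Hg0 HPa Hgb); done.
Qed.

Lemma Db_pow t h l : Db t h -> Db (l * t) (h ^+ l).
Proof.
move=> Ht; elim: l => [|l IH]; first by rewrite mul0n expr0; apply: Db1.
by rewrite mulSn exprS; apply: Db_mul.
Qed.

Lemma Db_half t : dist K pi t <= 4^-1 -> Db t 2^-1.
Proof.
move=> Hd x x' A.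
set pA := \sum_(y in A) pi y.
have B1 : forall z, `|KA t z A - pA| <= 4^-1.
  move=> z; apply: le_trans Hd; apply: le_trans (lebm _ z).
  by rewrite /dTV; apply: (lebm (fun A0 : {set S} => `|\sum_(y in A0) kpow K t z y - \sum_(y in A0) pi y|) A).
have := B1 x; have := B1 x'; rewrite !ler_norml => /andP [h1 h2] /andP [h3 h4].
lra.
Qed.

Lemma Db_pi j c x A : Db j c -> `|KA j x A - \sum_(y in A) pi y| <= c.
Proof.
move=> H.
have E1 : \sum_(y in A) pi y = \sum_x' pi x' * KA j x' A.
  rewrite /KA; under [RHS]eq_bigr do rewrite mulr_sumr.
  rewrite exchange_big /=; apply: eq_bigr => y _; by rewrite kpow_stat.
have E2 : KA j x A = \sum_x' pi x' * KA j x A by rewrite -mulr_suml pi1 mul1r.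
have c0 : 0 <= c by have := H x x A; rewrite subrr.
rewrite E1 E2 -sumrB ler_norml; apply/andP; split.
  rewrite -[c]mul1r -pi1 mulr_suml -sumrN; apply: ler_sum => x' _.
  rewrite -mulrBr -mulrN; apply: ler_wpM2l => //; rewrite lerNl opprB; exact: H.
rewrite -[c]mul1r -pi1 mulr_suml; apply: ler_sum => x' _.
rewrite -mulrBr; apply: ler_wpM2l => //; exact: H.
Qed.


Lemma psi_le N (ii kk : 'I_N.+1) j e :
  (0 < j)%N -> val kk = (val ii + j)%N -> Db j e ->
  (forall a, e <= 4^-1 * pi a) -> psi K pi kk ii <= 4^-1.
Proof.
move=> j0 Hk HD He.
have ik : (val ii < val kk)%N by rewrite Hk; lia.
have Ej : (val kk - val ii)%N = j by rewrite Hk addKn.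
have PA : forall A, Pr K pi (ev kk A) = \sum_(y in A) pi y.
  move=> A; rewrite (_ : ev kk A = ev kk A :&: ev ii setT); last first.
    by apply/setP=> w; rewrite !inE andbT.
  rewrite (Pr_formula Kst pist A setT ik (erefl _) (erefl _)) big_setT'.
  under eq_bigr do rewrite mulr_sumr.
  rewrite exchange_big /=; apply: eq_bigr => y _; by rewrite kpow_stat.
have PB : forall B, Pr K pi (ev ii B) = \sum_(x in B) pi x.
  move=> B; rewrite (_ : ev ii B = ev kk setT :&: ev ii B); last first.
    by apply/setP=> w; rewrite !inE.
  rewrite (Pr_formula Kst pist setT B ik (erefl _) (erefl _)).
  by apply: eq_bigr => x _; rewrite big_setT' kpow_row // mulr1.
rewrite /psi; apply: (big_ind (fun x => x <= 4^-1)).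
- by rewrite invr_ge0.
- by move=> x y hx hy; rewrite ge_max hx hy.
move=> A _; apply: (big_ind (fun x => x <= 4^-1)).
- by rewrite invr_ge0.
- by move=> x y hx hy; rewrite ge_max hx hy.
move=> B /andP [].
rewrite (Pr_formula Kst pist A B ik (erefl _) (erefl _)) !PA !PB Ej => hA hB.
set pA := \sum_(y in A) pi y; set pB := \sum_(x in B) pi x.
have -> : \sum_(x in B) pi x * \sum_(y in A) kpow K j x y - pA * pB =
          \sum_(x in B) pi x * (KA j x A - pA).
  rewrite /pB mulr_sumr -sumrB; apply: eq_bigr => x _.
  by rewrite /KA mulrBr [pA * _]mulrC.
have hAB : 0 < pA * pB by rewrite mulr_gt0.
match goal with |- is_true (Order.le (Num.norm ?z) ?c) => change (`|z| <= c) end.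
rewrite normrM normfV (gtr0_norm hAB) ler_pdivrMr //.
have H1 : `|\sum_(x in B) pi x * (KA j x A - pA)| <= pB * e.
  apply: le_trans (ler_norm_sum _ _ _) _; rewrite /pB mulr_suml.
  apply: ler_sum => x _; rewrite normrM ger0_norm //; apply: ler_wpM2l => //.
  exact: Db_pi.
case: (set_0Vmem A) => [A0 | [a aA]].
  by move: hA; rewrite /pA A0 big_set0 ltxx.
have H2 : e <= 4^-1 * pA.
  apply: le_trans (He a) _; apply: ler_wpM2l; first by rewrite invr_ge0.
  by apply: (sum_ge_term (P := mem A)) => // y _.
apply: le_trans H1 _; rewrite mulrA (mulrC _ pB); apply: ler_wpM2l => //.
exact: ltW.
Qed.

End Mix.


Theorem propositionB (R : realType) (S : finType) (K : S -> S -> R) (pi : S -> R)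
    (N t : nat) :
  stochastic K -> stationary_dist K pi -> ergodic K ->
  is_tmix K pi t ->
  (Psi K pi N)%:R <= (ln (pi_min pi)^-1 / ln 2 + 3) * t%:R.
Proof.
move=> Kst [[pi0 pi1] pist] [irr _] [t1 [Hdt _]].
have pipos : forall y, 0 < pi y.
  case: (boolP [exists x, 0 < pi x]) => [/existsP [x0 hx0] | HH].
    move=> y; case: (irr x0 y) => s hs.
    rewrite -(kpow_stat pist s y).
    apply: lt_le_trans (_ : 0 < pi x0 * kpow K s x0 y) _; first exact: mulr_gt0.
    apply: (sum_ge_term (P := xpredT)) => // x _; apply: mulr_ge0 => //; apply: (kpow_ge0 Kst).
  exfalso; have : \sum_x pi x = 0.
    apply: big1 => z _; apply/eqP; rewrite eq_le pi0 andbT leNgt.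
    by move/existsPn: HH; apply.
  by rewrite pi1 => /eqP; rewrite oner_eq0.
set m := pi_min pi.
have m0 : 0 < m.
  rewrite /m /pi_min; apply: (big_ind (fun x => 0 < x)) => //.
  by move=> x y hx hy; rewrite lt_min hx hy.
have pile1 : forall x, pi x <= 1.
  by move=> x; rewrite -pi1; apply: (sum_ge_term (P := xpredT)).
have m1 : m <= 1.
  rewrite /m /pi_min; apply: (big_ind (fun x => x <= 1)) => //.
  by move=> x y hx hy; rewrite ge_min hx.
have mle : forall a, m <= pi a.
  by move=> a; rewrite /m /pi_min (bigD1 a) //= ge_min lexx.
have exl : exists l, 4 / m <= 2 ^+ l.
  exists (Num.Def.archi_bound (4 / m)).
  apply: le_trans (ltW (archi_boundP _)) _; first by apply: divr_ge0 => //; exact: ltW.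
  rewrite -natrX ler_nat; apply: ltnW; exact: ltn_expl.
case: (ex_minnP exl) => l Hl Hmin.
have h2 : 0 < (2 : R) ^+ l by apply: exprn_gt0.
have l0 : (0 < l)%N.
  case: l Hl {Hmin h2} => // /=; rewrite expr0 => H.
  have : 4 <= 4 / m by rewrite ler_pdivlMr // ler_piMr.
  lra.
have He : forall a, (2^-1)^+l <= 4^-1 * pi a.
  move=> a; apply: le_trans (_ : _ <= 4^-1 * m) _; last by apply: ler_wpM2l; rewrite ?invr_ge0 ?mle.
  rewrite exprVn -(ler_pM2r h2) mulVf ?gt_eqF //.
  move: Hl; rewrite ler_pdivrMr // => Hl; lra.
have Hok : Psi_ok K pi N (l * t).
  rewrite /Psi_ok muln_gt0 l0 t1 /=.
  apply/forallP => ii; apply/forallP => kk; apply/implyP => /eqP Hk.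
  apply: (psi_le Kst pist pi0 pi1 _ Hk); first by rewrite muln_gt0 l0.
    exact: (Db_pow Kst l (Db_half Hdt)).
  exact: He.
have HPsi : (Psi K pi N <= l * t)%N.
  by rewrite /Psi; case: ex_minnP => p _ Hp; apply: Hp.
apply: le_trans (_ : (l * t)%:R <= _).
  by rewrite ler_nat.
rewrite natrM; apply: ler_wpM2r => //.
case: l Hl Hmin l0 {h2 He Hok HPsi} => // l' Hl Hmin _.
have h : (2 : R) ^+ l' < 4 / m.
  by rewrite ltNge; apply/negP => h; have := Hmin _ h; lia.
have c0 : 0 < ln (2 : R) by apply: ln_gt0; lra.
have h' : ln ((2 : R) ^+ l') < ln (2 : R) *+ 2 + ln m^-1.
  rewrite -lnXn; last by lra.
  have p2 : forall n, (2 : R) ^+ n \is Num.pos by move=> n; rewrite posrE exprn_gt0.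
  rewrite -lnM ?p2 ?posrE ?invr_gt0 //.
  rewrite ltr_ln; [| exact: p2 | by rewrite posrE divr_gt0 // exprn_gt0].
  have e4 : (2:R) ^+ 2 = 4 by rewrite expr2; lra.
  by rewrite e4.
rewrite lnXn in h'; last by lra.
rewrite -[ln 2 *+ l']mulr_natr -[ln 2 *+ 2]mulr_natr in h'.
rewrite -(ler_pM2r c0) mulrDl divfK ?gt_eqF // -addn1 natrD.

rewrite mulrDl mul1r (mulrC l'%:R); move: h'; set a := ln 2 * l'%:R; set c := ln 2; move=> h'; lra.
Qed.
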